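(* Let $S\subseteq X$, let $\psi:S\to Z$ be $C$-convex, $x_0\in S$, and let $f=\psi^C$. Assume $C$ is polyhedral and that for every $x\in X$ and every $z^*\in C^-\setminus\{0\}$ the function $t\mapsto\varphi_{f,z^*}(x_0+t(x-x_0))$ (for $t\in[0,1]$, $+\infty$ otherwise) is lower semicontinuous at $t=0$. Then $x_0$ solves the set-valued Minty inequality for $f$, i.e. for all $x\in X$ with $f(x)\ne f(x_0)$ one has $f'(x,x_0-x)\not\subseteq 0^+f(x)$, if and only if $\psi(x_0)\in\operatorname{Eff}\psi[S]$.
   Context: $X$ is a real linear space, $Z$ a real locally convex Hausdorff space with dual $Z^*$, $C\subseteq Z$ a closed convex cone with $0\in C$ and $C^-=\{z^*\in Z^*: z^*(c)\le0\ \forall c\in C\}$, $C^-\setminus\{0\}\ne\emptyset$. $C$ is polyhedral if $C=\bigcap_{i=1}^n\{z: 0\le -m_i^*(z)\}$ for finitely many $m_i^*\in Z^*$. $\psi:S\to Z$ is $C$-convex if $S$ is convex and $(1-t)\psi(x_1)+t\psi(x_2)\in\psi(x_1+t(x_2-x_1))+C$ for all $x_1,x_2\in S$, $t\in(0,1)$. $f=\psi^C:X\to 2^Z$ is $f(x)=\psi(x)+C$ for $x\in S$ and $f(x)=\emptyset$ otherwise. $\psi(x_0)\in\operatorname{Eff}\psi[S]$ means: for all $y\in\psi[S]$, $\psi(x_0)\in y+C$ implies $\psi(x_0)\in y+(C\cap -C)$. For $A,B\subseteq Z$: $A\ominus B=\{z: B+\{z\}\subseteq A\}$; $0^+A=\{z:A+\{z\}\subseteq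 A\}$ for $A\neq\emptyset$, $0^+\emptyset=\emptyset$. $f'(x,u)=\bigcap_{t_0>0}\operatorname{cl}\operatorname{co}\bigcup_{0<t<t_0}\frac1t\big(f(x+tu)\ominus f(x)\big)$. $\varphi_{f,z^*}(x)=\inf\{-z^*(z): z\in f(x)\}$, i.e. $-z^*(\psi(x))$ on $S$ and $+\infty$ outside $S$. *)

(* Defs.v *)
From HB Require Import structures.
From mathcomp Require Import all_boot all_order all_algebra.
From mathcomp Require Import all_classical all_reals all_analysis.
Set Implicit Arguments. Unset Strict Implicit. Unset Printing Implicit Defensive.
Import Order.TTheory GRing.Theory Num.Theory numFieldTopology.Exports numFieldNormedType.Exports.
Local Open Scope classical_set_scope.
Local Open Scope ring_scope.

Section Defs.
Context {R : realType}.

Definition is_dual_elem (Z : tvsType R) (zs : Z -> R) : Prop :=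
  (forall (a : R) (x y : Z), zs (a *: x + y) = a * zs x + zs y) /\ continuous zs.

Definition neg_polar (Z : tvsType R) (C : set Z) : set (Z -> R) :=
  [set zs | is_dual_elem zs /\ forall c, C c -> zs c <= 0].

Definition is_cone (Z : lmodType R) (C : set Z) : Prop :=
  forall (c : Z) (t : R), C c -> 0 < t -> C (t *: c).

Definition polyhedral (Z : tvsType R) (C : set Z) : Prop :=
  exists (n : nat) (m : 'I_n -> Z -> R),
    (forall i, is_dual_elem (m i)) /\
    C = [set z | forall i, 0 <= - m i z].

Definition translate (Z : lmodType R) (z : Z) (A : set Z) : set Z :=
  [set z + a | a in A].

Definition C_convex (X Z : lmodType R) (C : set Z) (S : set X) (psi : X -> Z)
  : Prop :=
  convex_set (S : set (convex_lmodType X)) /\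
  forall (x1 x2 : X) (t : R), S x1 -> S x2 -> 0 < t -> t < 1 ->
    translate (psi (x1 + t *: (x2 - x1))) C ((1 - t) *: psi x1 + t *: psi x2).

Definition psiC (X Z : lmodType R) (C : set Z) (S : set X) (psi : X -> Z)
  (x : X) : set Z :=
  [set z | S x /\ translate (psi x) C z].

Definition in_Eff (X Z : lmodType R) (C : set Z) (S : set X) (psi : X -> Z)
  (z0 : Z) : Prop :=
  forall y, (psi @` S) y -> translate y C z0 ->
    translate y (C `&` [set - c | c in C]) z0.

Definition ominus (Z : lmodType R) (A B : set Z) : set Z :=
  [set z | forall b, B b -> A (b + z)].

(* recession cone 0^+ A, with 0^+ emptyset = emptyset *)
Definition recession (Z : lmodType R) (A : set Z) : set Z :=
  [set z | A !=set0 /\ forall a, A a -> A (a + z)].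

Definition scale_set (Z : lmodType R) (s : R) (A : set Z) : set Z :=
  [set s *: a | a in A].

Definition conv_hull (Z : lmodType R) (A : set Z) : set Z :=
  \bigcap_(B in [set B : set Z | convex_set (B : set (convex_lmodType Z)) /\ A `<=` B]) B.

Definition setdir_deriv (X : lmodType R) (Z : tvsType R) (f : X -> set Z)
  (x u : X) : set Z :=
  \bigcap_(t0 in [set t0 : R | 0 < t0])
    closure (conv_hull (\bigcup_(t in [set t : R | 0 < t < t0])
                          scale_set t^-1 (ominus (f (x + t *: u)) (f x)))).

Definition phi_fz (X Z : lmodType R) (f : X -> set Z) (zs : Z -> R) (x : X)
  : \bar R :=
  ereal_inf [set (- zs z)%:E | z in f x].

Definition lsc_at (T : topologicalType) (g : T -> \bar R) (t : T) : Prop :=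
  forall a : R, (a%:E < g t)%E ->
    exists2 V, nbhs t V & forall y, V y -> (a%:E < g y)%E.

Definition minty_sol (X : lmodType R) (Z : tvsType R) (f : X -> set Z)
  (x0 : X) : Prop :=
  forall x : X, f x <> f x0 ->
    ~ (setdir_deriv f x (x0 - x) `<=` recession (f x)).

End Defs.

(* Main.v *)
Require Import Defs.
From HB Require Import structures.
From mathcomp Require Import all_boot all_order all_algebra.
From mathcomp Require Import all_classical all_reals all_analysis.
From mathcomp Require Import ring lra.
Import Order.TTheory GRing.Theory Num.Theory numFieldTopology.Exports numFieldNormedType.Exports.
Local Open Scope classical_set_scope.
Local Open Scope ring_scope.
Set Implicit Arguments. Unset Strict Implicit.
Lemma dual_lin (R : realType) (Z : tvsType R) (zs : Z -> R) :
  is_dual_elem zs ->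
  [/\ zs 0 = 0, forall a b, zs (a + b) = zs a + zs b,
      forall a, zs (- a) = - zs a & forall (k : R) a, zs (k *: a) = k * zs a].
Proof.
move=> [L _].
have z0 : zs 0 = 0.
  have := L 1 0 0; rewrite scale1r addr0 mul1r => H.
  lra.
have zD : forall a b, zs (a + b) = zs a + zs b.
  by move=> a b; rewrite -[a in LHS]scale1r L mul1r.
have zZ : forall (k : R) a, zs (k *: a) = k * zs a.
  by move=> k a; rewrite -[k *: a]addr0 L z0 addr0.
split => //; move=> a; by rewrite -scaleN1r zZ mulN1r.
Qed.

Lemma mkconv (R : realType) (X : lmodType R) (S : set X) :
  convex_set (S : set (convex_lmodType X)) ->
  forall a b (t : R), S a -> S b -> 0 <= t -> t <= 1 -> S (a + t *: (b - a)).
Proof.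
move=> cS a b t Sa Sb t0 t1.
have := cS b a (Itv01 t0 t1); rewrite !inE => /(_ Sb Sa).
congr S; rewrite /conv /=.
rewrite scalerBr scalerBl scale1r.
by rewrite addrC [_ *: b - _]addrC addrA.
Qed.

Lemma conv_incr (R : realType) (h : R -> R) :
  (forall a b t, 0 < a -> a <= 1 -> 0 < b -> b <= 1 -> 0 < t -> t < 1 ->
     h ((1 - t) * a + t * b) <= (1 - t) * h a + t * h b) ->
  forall p q u, 0 < p -> p < q -> q < u -> u <= 1 -> h p < h q -> h q < h u.
Proof.
move=> hc p q u p0 pq qu u1 hpq.
rewrite ltNge; apply/negP => huq.
have up : 0 < u - p by lra.
set t := (q - p) / (u - p).
have t0 : 0 < t by rewrite divr_gt0 // subr_gt0.
have t1 : t < 1 by rewrite ltr_pdivrMr // mul1r; lra.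
have eq : (1 - t) * p + t * u = q.
  rewrite /t; field; lra.
have := hc p u t p0 ltac:(lra) ltac:(lra) u1 t0 t1; rewrite eq => H.
have H1 : (1 - t) * h p < (1 - t) * h q by rewrite ltr_pM2l // subr_gt0.
have H2 : t * h u <= t * h q by rewrite ler_pM2l.
lra.
Qed.

Lemma mono1D (R : realType) (h : R -> R) :
  (forall p q u, 0 < p -> p < q -> q < u -> u <= 1 -> h p < h q -> h q < h u) ->
  h 1 <= h 0 ->
  (forall a, a < h 0 -> exists2 e, 0 < e & forall s, 0 < s -> s < e -> a < h s) ->
  exists2 d, 0 < d & forall s' s, 0 < s' -> s' < s -> s < d -> h s <= h s'.
Proof.
move=> Hc h10 lsc.
have bad : forall d, 0 < d ->
   (forall s' s, 0 < s' -> s' < s -> s < d -> h s <= h s') \/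
   exists s', exists s, [/\ 0 < s', s' < s, s < d & h s' < h s].
  move=> d d0; case: (pselect (exists s', exists s, [/\ 0 < s', s' < s, s < d & h s' < h s])) => [E|nE]; first by right.
  left => s' s s0 ss sd; rewrite leNgt; apply/negP => lt; apply: nE.
  by exists s', s; split.
case: (bad 1 ltr01) => [H|[p [q [p0 pq q1 hpq]]]]; first by exists 1.
have hq1 : h q < h 1 by apply: (Hc p q 1) => //.
have [e e0 He] := lsc (h p) ltac:(lra).
have md : 0 < Num.min e p by rewrite lt_min e0 p0.
case: (bad _ md) => [H|[p2 [q2 [p20 pq2 q2m hpq2]]]]; first by exists (Num.min e p).
move: q2m; rewrite lt_min => /andP [q2e q2p].
have := Hc p2 q2 p p20 pq2 q2p ltac:(lra) hpq2.
have := He p2 p20 ltac:(lra).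
lra.
Qed.

Lemma seg1 (R : realType) (X : lmodType R) (x0 v : X) (s t : R) :
  x0 + s *: v + t *: (x0 - (x0 + s *: v)) = x0 + (s - t * s) *: v.
Proof.
have -> : x0 - (x0 + s *: v) = - (s *: v) by rewrite opprD addNKr.
by rewrite scalerN scalerA -addrA -scalerBl.
Qed.

Lemma seg2 (R : realType) (X : lmodType R) (x0 v : X) (a b t : R) :
  (x0 + a *: v) + t *: ((x0 + b *: v) - (x0 + a *: v)) =
  x0 + ((1 - t) * a + t * b) *: v.
Proof.
rewrite opprD addrACA subrr add0r -scalerBl scalerA -addrA -scalerDl.
congr (_ + _ *: _); ring.
Qed.

Lemma vec3 (R : realType) (Z : lmodType R) (p q c : Z) (t : R) :
  p + c + t *: (q - p) = ((1 - t) *: p + t *: q) + c.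
Proof.
rewrite scalerBr scalerBl scale1r.
rewrite -!addrA.
apply: congr1.
by rewrite [LHS]addrC -[LHS]addrA addrCA.
Qed.

Lemma C_add (R : realType) (Z : tvsType R) (C : set Z)
  (Ccvx : convex_set (C : set (convex_lmodType Z))) (Ccone : is_cone C) a b :
  C a -> C b -> C (a + b).
Proof.
move=> Ca Cb.
have h0 : (0 : R) <= 2^-1 by rewrite invr_ge0 ler0n.
have h1 : (2^-1 : R) <= 1 by rewrite invf_le1 // ?ler1n // ltr0n.
have := Ccvx a b (Itv01 h0 h1); rewrite !inE => /(_ Ca Cb) H.
have := Ccone _ 2 H (ltr0n _ 2).
congr C; rewrite /conv /= scalerDr !scalerA.
have -> : (2 * unstable.onem 2^-1 : R) = 1 by rewrite /unstable.onem; field.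
by rewrite divff ?pnatr_eq0 // !scale1r.
Qed.

Lemma rec_C (R : realType) (X : lmodType R) (Z : tvsType R) (C : set Z)
  (C0 : C 0) (S : set X) (psi : X -> Z) y z :
  S y -> recession (psiC C S psi y) z -> C z.
Proof.
move=> Sy [_ Hr].
have [_ [c Cc Ec]] := Hr (psi y) (conj Sy (ex_intro2 _ _ 0 C0 (addr0 _))).
by move/addrI: Ec => <-.
Qed.

Lemma C_rec (R : realType) (X : lmodType R) (Z : tvsType R) (C : set Z)
  (Ccvx : convex_set (C : set (convex_lmodType Z))) (Ccone : is_cone C)
  (C0 : C 0) (S : set X) (psi : X -> Z) y z :
  S y -> C z -> recession (psiC C S psi y) z.
Proof.
move=> Sy Cz; split; first by exists (psi y); split => //; exists 0 => //; rewrite addr0.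
move=> a [_ [c Cc <-]]; split => //; exists (c + z); first exact: C_add.
by rewrite addrA.
Qed.

Lemma phiE (R : realType) (X : lmodType R) (Z : tvsType R) (C : set Z)
  (C0 : C 0) (S : set X) (psi : X -> Z) zs y :
  neg_polar C zs -> S y -> phi_fz (psiC C S psi) zs y = (- zs (psi y))%:E.
Proof.
move=> [zd zC] Sy; have [z0 zD zN zZ] := dual_lin zd.
apply/le_anti/andP; split.
  apply: ereal_inf_lbound; exists (psi y) => //; split => //; exists 0 => //; exact: addr0.
apply: le_ereal_inf_tmp => _ [z [_ [c Cc <-]] <-].
rewrite lee_fin zD opprD lerDl oppr_ge0; exact: zC.
Qed.

Lemma backward (R : realType) (X : lmodType R) (Z : tvsType R)
  (C : set Z) (Ccvx : convex_set (C : set (convex_lmodType Z)))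
  (Ccone : is_cone C) (C0 : C 0)
  (S : set X) (psi : X -> Z) (psi_cvx : C_convex C S psi)
  (x0 : X) (Sx0 : S x0) :
  in_Eff C S psi (psi x0) -> minty_sol (psiC C S psi) x0.
Proof.
move=> Eff x Hne Hsub.
have [cS cpsi] := psi_cvx.
case: (pselect (S x)) => Sx; last first.
  have : setdir_deriv (psiC C S psi) x (x0 - x) 0.
    move=> t0 t00; apply: subset_closure => B [_ UB]; apply: UB.
    exists (t0 / 2); first by rewrite /= divr_gt0 //= ltr_pdivrMr // ltr_pMr // ltr1n.
    exists 0; last exact: scaler0.
    by move=> b [].
  by move/Hsub => [[b [/Sx]]].
set d := psi x0 - psi x.
have nCd : ~ C d.
  move=> Cd; apply: Hne.
  have [a [Ca [c' Cc' Ea]] Ex] : translate (psi x) (C `&` [set - c | c in C]) (psi x0).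
    apply: Eff; first by exists x.
    by exists d => //; rewrite /d addrC subrK.
  apply/seteqP; split => z [_ [c Cc <-]]; split => //.
    exists (c' + c); first exact: C_add.
    by rewrite -Ex -Ea -addrA addKr.
  exists (a + c); first exact: C_add.
  by rewrite addrA Ex.
apply: nCd; apply: (rec_C C0 Sx); apply: Hsub.
move=> t0 t00; apply: subset_closure => B [_ UB]; apply: UB.
set t := Num.min t0 1 / 2.
have mt0 : 0 < Num.min t0 1 by rewrite lt_min t00 ltr01.
have t0' : 0 < t by rewrite divr_gt0.
have tlt : t < Num.min t0 1 by rewrite /t ltr_pdivrMr // ltr_pMr // ltr1n.
move: tlt; rewrite lt_min => /andP [tt0 t1].
exists t; first by rewrite /= t0' tt0.
exists (t *: d); last by rewrite scalerA mulVf ?scale1r // gt_eqF.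
move=> b [_ [c Cc <-]].
have Sy : S (x + t *: (x0 - x)) by apply: mkconv => //; apply: ltW.
split => //.
have [c' Cc' Ec'] := cpsi x x0 t Sx Sx0 t0' t1.
exists (c' + c); first exact: C_add.
by rewrite addrA Ec' /d vec3.
Qed.

Lemma forward (R : realType) (X : lmodType R) (Z : tvsType R)
  (C : set Z) (Ccl : closed C) (Ccvx : convex_set (C : set (convex_lmodType Z)))
  (Ccone : is_cone C) (C0 : C 0)
  (S : set X) (psi : X -> Z) (psi_cvx : C_convex C S psi)
  (x0 : X) (Sx0 : S x0)
  (Cpoly : polyhedral C)
  (hlsc : forall (x : X) (zs : Z -> R), neg_polar C zs -> zs <> (fun _ => 0) ->
     lsc_at (fun t : R => if (0 <= t) && (t <= 1)
                          then phi_fz (psiC C S psi) zs (x0 + t *: (x - x0))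
                          else +oo%E) 0) :
  minty_sol (psiC C S psi) x0 -> in_Eff C S psi (psi x0).
Proof.
move=> Hm y [x Sx <-] [c Cc Ec].
have [cS cpsi] := psi_cvx.
have [n [m [mdual Ceq]]] := Cpoly.
exists c => //; split => //.
case: (pselect (C (- c))) => [Cnc|nCnc]; first by exists (- c) => //; rewrite opprK.
exfalso.
have Ci : forall z, C z <-> forall i, 0 <= - m i z by move=> z; rewrite Ceq.
have [j hj] : exists j, - m j (- c) < 0.
  move: nCnc; rewrite Ci => /existsNP [j /negP]; rewrite -ltNge => ?; by exists j.
have lin i := dual_lin (mdual i).
have mC : forall i z, C z -> m i z <= 0.
  by move=> i z /Ci /(_ i); rewrite oppr_ge0.
pose xs := fun s : R => x0 + s *: (x - x0).
pose h := fun i s => - m i (psi (xs s)).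
have xs0 : xs 0 = x0 by rewrite /xs scale0r addr0.
have xs1 : xs 1 = x by rewrite /xs scale1r addrC subrK.
have Sxs : forall s, 0 <= s -> s <= 1 -> S (xs s).
  by move=> s s0 s1; rewrite /xs; exact: mkconv.
have hconv : forall i a b t, 0 <= a -> a <= 1 -> 0 <= b -> b <= 1 -> 0 < t -> t < 1 ->
    h i ((1 - t) * a + t * b) <= (1 - t) * h i a + t * h i b.
  move=> i a b t a0 a1 b0 b1 t0 t1.
  have [c' Cc' E'] := cpsi (xs a) (xs b) t (Sxs a a0 a1) (Sxs b b0 b1) t0 t1.
  have eq : xs a + t *: (xs b - xs a) = xs ((1 - t) * a + t * b) by rewrite /xs seg2.
  rewrite eq in E'.
  have [_ zD _ zZ] := lin i.
  have := congr1 (m i) E'; rewrite !zD !zZ => H.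
  have := mC i c' Cc'; rewrite /h; nra.
have h10 : forall i, h i 1 <= h i 0.
  move=> i; have [_ zD _ _] := lin i; rewrite /h xs0 xs1.
  have := congr1 (m i) Ec; rewrite zD => H; have := mC i c Cc; lra.
have hj10 : h j 1 < h j 0.
  have [_ zD zN _] := lin j; move: hj; rewrite zN opprK => hj.
  rewrite /h xs0 xs1; have := congr1 (m j) Ec; rewrite zD => H; lra.
have hlsc_i : forall i, m i <> (fun _ => 0) ->
    forall a, a < h i 0 -> exists2 e, 0 < e & forall s, 0 < s -> s < e -> a < h i s.
  move=> i mi0 a ha.
  have np : neg_polar C (m i) by split => //; exact: mC.
  case: (hlsc x (m i) np mi0 a) => [|V HV HVa].
    rewrite lexx ler01 /= (phiE C0 _ np) ?lte_fin //; exact: (Sxs 0 (lexx _) ler01).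
  move/nbhs_ballP: HV => [e e0 He].
  exists (Num.min e 1); first by rewrite lt_min e0 ltr01.
  move=> s s0; rewrite lt_min => /andP [se s1].
  have Vs : V s.
    apply: He; rewrite -ball_normE /ball_ /= sub0r normrN gtr0_norm //.
  have := HVa s Vs; rewrite (ltW s0) (ltW s1) /= (phiE C0 _ np) ?lte_fin //.
  exact: (Sxs s (ltW s0) (ltW s1)).
have mono : forall i, exists2 d, 0 < d &
    forall s' s, 0 < s' -> s' < s -> s < d -> h i s <= h i s'.
  move=> i; case: (pselect (m i = fun _ => 0)) => [mi0|mi0].
    by exists 1 => // s' s _ _ _; rewrite /h mi0 /= oppr0.
  apply: mono1D; [|exact: h10|exact: hlsc_i].
  apply: conv_incr => a b t a0 a1 b0 b1 t0 t1; apply: hconv => //; exact: ltW.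
have all : forall k : nat, exists2 d, 0 < d & forall i : 'I_n, (i < k)%N ->
    forall s' s, 0 < s' -> s' < s -> s < d -> h i s <= h i s'.
  elim=> [|k [d d0 Hd]]; first by exists 1 => // i; rewrite ltn0.
  case: (ltnP k n) => kn; last first.
    exists d => // i ik; apply: Hd; exact: leq_trans (ltn_ord i) kn.
  have [e e0 He] := mono (Ordinal kn).
  exists (Num.min d e); first by rewrite lt_min d0 e0.
  move=> i; rewrite ltnS leq_eqVlt => /orP [/eqP ik|ik] s' s s0 ss;
    rewrite lt_min => /andP [sd se].
    have -> : i = Ordinal kn by apply: val_inj.
    exact: He.
  exact: Hd.
have [d d0 Hd] := all n.
set s := Num.min d 1 / 2.
have md : 0 < Num.min d 1 by rewrite lt_min d0 ltr01.
have s0 : 0 < s by rewrite divr_gt0.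
have slt : s < Num.min d 1 by rewrite /s ltr_pdivrMr // ltr_pMr // ltr1n.
move: slt; rewrite lt_min => /andP [sd s1].
have A : psiC C S psi (xs s) (psi (xs s)).
  split; first by apply: Sxs; apply: ltW.
  by exists 0 => //; rewrite addr0.
have Hfne : psiC C S psi (xs s) <> psiC C S psi x0.
  move=> E.
  have B : psiC C S psi x0 (psi x0) by split => //; exists 0 => //; rewrite addr0.
  have A' := A; rewrite E in A'; rewrite -E in B.
  move: A' B => [_ [c1 Cc1 E1]] [_ [c2 Cc2 E2]].
  have [_ zD _ _] := lin j.
  have := congr1 (m j) E1; have := congr1 (m j) E2; rewrite !zD.
  have := mC j c1 Cc1; have := mC j c2 Cc2.
  have := hconv j 0 1 s (lexx _) ler01 ler01 (lexx _) s0 s1.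
  rewrite mulr0 add0r mulr1.
  have hs : s * h j 1 < s * h j 0 by rewrite ltr_pM2l.
  move: hs; rewrite /h xs0 => hs.
  lra.
apply: (Hm (xs s) Hfne) => z Hz.
apply: (C_rec Ccvx Ccone C0 psi (Sxs s (ltW s0) (ltW s1))).
have Hz1 := Hz 1 ltr01.
suff HU : conv_hull (\bigcup_(t in [set t : R | 0 < t < 1])
      scale_set t^-1 (ominus (psiC C S psi (xs s + t *: (x0 - xs s)))
                             (psiC C S psi (xs s)))) `<=` C.
  by have := closure_subset HU Hz1; rewrite -((closure_id C).1 Ccl).
move=> w Hw; apply: Hw; split => //.
move=> _ [t /= /andP [t0 t1] [a Ha <-]].
have [_ [c' Cc' Ec']] := Ha _ A.
apply: (Ccone); last by rewrite invr_gt0.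
have -> : a = (psi (xs s + t *: (x0 - xs s)) - psi (xs s)) + c'.
  by rewrite addrAC Ec' addrC addKr.
apply: (C_add Ccvx Ccone) => //.
rewrite /xs seg1 Ci => i.
have [_ zD zN _] := lin i.
rewrite zD zN opprD opprK.
have := Hd i (ltn_ord i) (s - t * s) s.
have ts : 0 < t * s by rewrite mulr_gt0.
have ts1 : t * s < s by rewrite gtr_pMl.
rewrite /h /xs => H.
have := H ltac:(lra) ltac:(lra) sd; lra.
Qed.

Unset Implicit Arguments.

Theorem mainTheorem5 (R : realType) (X : lmodType R) (Z : tvsType R)
  (Zhaus : hausdorff_space Z)
  (C : set Z) (Ccl : closed C) (Ccvx : convex_set (C : set (convex_lmodType Z)))
  (Ccone : is_cone C) (C0 : C 0)
  (Cpol_nontriv : exists2 zs, neg_polar C zs & zs <> (fun _ => 0))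
  (S : set X) (psi : X -> Z) (psi_cvx : C_convex C S psi)
  (x0 : X) (Sx0 : S x0)
  (Cpoly : polyhedral C)
  (hlsc : forall (x : X) (zs : Z -> R), neg_polar C zs -> zs <> (fun _ => 0) ->
     lsc_at (fun t : R => if (0 <= t) && (t <= 1)
                          then phi_fz (psiC C S psi) zs (x0 + t *: (x - x0))
                          else +oo%E) 0) :
  minty_sol (psiC C S psi) x0 <-> in_Eff C S psi (psi x0).
Proof.
split.
  exact: (forward Ccl Ccvx Ccone C0 psi_cvx Sx0 Cpoly hlsc).
exact: (backward Ccvx Ccone C0 psi_cvx Sx0).
Qed.
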